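(* Let $A_{1}\in \mathbb{C}^{m\times n}$, $b_{1}\in \mathbb{C}^{m}$, $A_{2}\in \mathbb{C}^{k\times n}$ with $r(A_{2})=k\geq 1$, and $b_{2}\in \mathbb{C}^{k}$. Define the subspaces \[ \mathcal{X}=P_{N(A_{2})}R(A_{1}^{*})=N(A_{2})\cap (N(A_{2})\cap N(A_{1}))^{\perp},\qquad \mathcal{Y}=N(A_{1})\oplus (A_{1}^{*}A_{1})^{\dagger}\big(N(A_{1})+N(A_{2})\big)^{\perp}. \] Then $\mathcal{X}$ and $\mathcal{Y}$ are complementary subspaces of $\mathbb{C}^n$ with \[ P_{\mathcal{X},\mathcal{Y}}=I-P_{\mathcal{Y},\mathcal{X}}=\big(A_1 (I-A_{2}^{\dagger}A_{2})\big)^{\dagger}A_1, \] and the following hold: 1. Every solution of the problem $\min_{x\in \mathbb{C}^{n}}\|A_{1}x-b_{1}\|^{2}$ subject to $A_{2}x=b_{2}$ lies in the set \[ \Xi =\{A_{1}^{\dagger}b_{1}+P_{\mathcal{Y},\mathcal{X}}(A_{2}^{\dagger}b_{2}-A_{1}^{\dagger}b_{1})+z:\ z\in N(A_{1})\cap N(A_{2})\}. \] 2. The element of $\Xi$ with the smallest Euclidean norm is $\xi:=A_{1}^{\dagger}b_{1}+P_{\mathcal{Y},\mathcal{X}}(A_{2}^{\dagger}b_{2}-A_{1}^{\dagger}b_{1})$. 3. For any $y\in\mathbb{C}^n$, the solution of $\min_{x\in\Xi}\|x-y\|$ is $\psi(y):=\xi+P_{N(A_1)\cap N(A_2)}\,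y$.
   Context: $A^{*}$ is the conjugate transpose, $A^{\dagger}$ the Moore–Penrose inverse, $r(A)$, $R(A)$, $N(A)$ the rank, range and null space of $A$; $\|\cdot\|$ is the Euclidean norm. For a subspace $S$, $S^{\perp}$ is its orthogonal complement, $P_S$ the orthogonal projector onto $S$, and for a matrix $B$, $BS=\{Bs:s\in S\}$. For complementary subspaces $L,M$ of $\mathbb{C}^n$, $P_{L,M}$ is the oblique projector onto $L$ along $M$ (the idempotent matrix with range $L$ and null space $M$). $\oplus$ denotes direct sum. *)

(* Defs.v *)
(* The field of complex numbers is modelled as R[i] for an
   arbitrary R : realType (mathcomp-real-closed's complex.v). *)
From HB Require Import structures.
From mathcomp Require Import all_boot all_order all_algebra.
From mathcomp Require Import reals.
From mathcomp Require Export complex.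
From Stdlib Require Import ClassicalEpsilon.
Set Implicit Arguments. Unset Strict Implicit. Unset Printing Implicit Defensive.
Import Order.TTheory GRing.Theory Num.Theory.
Local Open Scope ring_scope.

Section Defs.
Variable C : numClosedFieldType.

Definition ctr {p q : nat} (A : 'M[C]_(p, q)) : 'M[C]_(q, p) :=
  (map_mx Num.conj A)^T.

Definition penrose {p q : nat} (A : 'M[C]_(p, q)) (X : 'M[C]_(q, p)) : Prop :=
  [/\ A *m X *m A = A, X *m A *m X = X,
      ctr (A *m X) = A *m X & ctr (X *m A) = X *m A].

Definition mpinv {p q : nat} (A : 'M[C]_(p, q)) : 'M[C]_(q, p) :=
  epsilon (inhabits 0) (penrose A).

Definition subsp (n : nat) := 'cV[C]_n -> Prop.

Definition nullsp {p q : nat} (A : 'M[C]_(p, q)) : subsp q :=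
  fun x => A *m x = 0.
Definition rangesp {p q : nat} (A : 'M[C]_(p, q)) : subsp p :=
  fun y => exists x, y = A *m x.
Definition orthc {n : nat} (S : subsp n) : subsp n :=
  fun y => forall x, S x -> ctr x *m y = 0.
Definition capsp {n : nat} (S T : subsp n) : subsp n := fun x => S x /\ T x.
Definition addsp {n : nat} (S T : subsp n) : subsp n :=
  fun x => exists s t, [/\ S s, T t & x = s + t].
Definition imgsp {p q : nat} (B : 'M[C]_(p, q)) (S : subsp q) : subsp p :=
  fun y => exists s, S s /\ y = B *m s.
Definition eqsp {n : nat} (S T : subsp n) : Prop := forall x, S x <-> T x.

Definition complementary {n : nat} (S T : subsp n) : Prop :=
  (forall x, exists s t, [/\ S s, T t & x = s + t]) /\
  (forall x, S x -> T x -> x = 0).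

Definition direct_sum {n : nat} (S T : subsp n) : Prop :=
  forall x, S x -> T x -> x = 0.

Definition is_oproj {n : nat} (L M : subsp n) (P : 'M[C]_n) : Prop :=
  [/\ P *m P = P, eqsp (rangesp P) L & eqsp (nullsp P) M].
Definition oproj {n : nat} (L M : subsp n) : 'M[C]_n :=
  epsilon (inhabits 0) (is_oproj L M).
Definition oproj_orth {n : nat} (S : subsp n) : 'M[C]_n := oproj S (orthc S).

Definition vnorm {n : nat} (v : 'cV[C]_n) : C :=
  sqrtC (\sum_(i < n) `|v i 0| ^+ 2).

End Defs.

(* Main.v *)
Require Import Defs.
From HB Require Import structures.
From mathcomp Require Import all_boot all_order all_algebra.
From mathcomp Require Import reals complex.
From Stdlib Require Import ClassicalEpsilon.
Import Order.TTheory GRing.Theory Num.Theory.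
Set Implicit Arguments. Unset Strict Implicit. Unset Printing Implicit Defensive.
Local Open Scope ring_scope.

Section Lin.
Variable C : numClosedFieldType.
Implicit Types p q r : nat.

Lemma ctrM p q r (A : 'M[C]_(p, q)) (B : 'M[C]_(q, r)) :
  ctr (A *m B) = ctr B *m ctr A.
Proof. by rewrite /ctr map_mxM trmx_mul. Qed.

Lemma ctrK p q (A : 'M[C]_(p, q)) : ctr (ctr A) = A.
Proof.
apply/matrixP=> i j; rewrite /ctr !mxE; exact: conjCK.
Qed.

Lemma ctrD p q (A B : 'M[C]_(p, q)) : ctr (A + B) = ctr A + ctr B.
Proof. by apply/matrixP=> i j; rewrite /ctr !mxE rmorphD. Qed.

Lemma ctrN p q (A : 'M[C]_(p, q)) : ctr (- A) = - ctr A.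
Proof. by apply/matrixP=> i j; rewrite /ctr !mxE rmorphN. Qed.

Lemma ctrB p q (A B : 'M[C]_(p, q)) : ctr (A - B) = ctr A - ctr B.
Proof. by rewrite ctrD ctrN. Qed.

Lemma ctr0 p q : ctr (0 : 'M[C]_(p, q)) = 0.
Proof. by apply/matrixP=> i j; rewrite /ctr !mxE rmorph0. Qed.

Lemma ctr1 p : ctr (1%:M : 'M[C]_p) = 1%:M.
Proof.
apply/matrixP=> i j; rewrite /ctr !mxE .
by rewrite rmorph_nat eq_sym.
Qed.

Lemma ctr_eq0 p q (A : 'M[C]_(p, q)) : ctr A *m A = 0 -> A = 0.
Proof.
move=> H; apply/matrixP=> i j.
have := congr1 (fun M : 'M[C]_q => M j j) H; rewrite !mxE => /eqP.
under eq_bigr => l _ do rewrite /ctr !mxE mulrC -normCK.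
rewrite psumr_eq0; last by move=> l _; rewrite exprn_ge0.
move/allP/(_ i (mem_index_enum _)) => /=.
by rewrite sqrf_eq0 normr_eq0 => /eqP ->.
Qed.

Lemma ctr_eq0r p q (A : 'M[C]_(p, q)) : A *m ctr A = 0 -> A = 0.
Proof.
move=> H; rewrite -[A]ctrK (@ctr_eq0 _ _ (ctr A)) ?ctr0 // ctrK //.
Qed.

Definition nsq n (v : 'cV[C]_n) : C := (ctr v *m v) 0 0.

Lemma nsq_ge0 n (v : 'cV[C]_n) : 0 <= nsq v.
Proof.
rewrite /nsq mxE; apply: sumr_ge0 => l _.
by rewrite /ctr !mxE mulrC -normCK exprn_ge0.
Qed.

Lemma vnormE n (v : 'cV[C]_n) : vnorm v ^+ 2 = nsq v.
Proof.
rewrite /vnorm sqrtCK /nsq mxE; apply: eq_bigr => l _.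
by rewrite /ctr !mxE mulrC -normCK.
Qed.


Lemma vnormE' n (v : 'cV[C]_n) : vnorm v = sqrtC (nsq v).
Proof.
rewrite /vnorm /nsq mxE; congr sqrtC; apply: eq_bigr => l _.
by rewrite /ctr !mxE mulrC -normCK.
Qed.

Lemma vnorm_lt n (a b : 'cV[C]_n) : nsq a < nsq b -> vnorm a < vnorm b.
Proof.
by move=> H; rewrite !vnormE' ltr_sqrtC // qualifE /= nsq_ge0.
Qed.

Lemma nsq_gt0 n (v : 'cV[C]_n) : v != 0 -> 0 < nsq v.
Proof.
move=> nz; rewrite lt_def nsq_ge0 andbT; apply/eqP => H; move/eqP: nz; apply.
apply: ctr_eq0; apply/matrixP => i j; rewrite !ord1 [RHS]mxE; exact: H.
Qed.

Lemma ctr_orth_sym p q (u : 'M[C]_(p, q)) (v : 'M[C]_(p, q)) :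
  ctr u *m v = 0 -> ctr v *m u = 0.
Proof. by move=> H; rewrite -[u]ctrK -ctrM H ctr0. Qed.

Lemma pythag n (u v : 'cV[C]_n) : ctr u *m v = 0 -> nsq (u + v) = nsq u + nsq v.
Proof.
move=> H; have H' := ctr_orth_sym H.
rewrite /nsq ctrD mulmxDl !mulmxDr H H' addr0 add0r.
by rewrite [LHS]mxE.
Qed.

Lemma mx_ext p q (A B : 'M[C]_(p, q)) : (forall x : 'cV[C]_q, A *m x = B *m x) -> A = B.
Proof.
move=> H; apply/matrixP=> i j.
have := congr1 (fun M : 'cV[C]_p => M i 0) (H (delta_mx j 0)).
by rewrite -!colE !mxE.
Qed.


Lemma herm_inv r (N : 'M[C]_r) : ctr N = N -> N \in unitmx -> ctr (invmx N) = invmx N.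
Proof.
move=> HN uN.
have E : ctr (invmx N) *m N = 1%:M by rewrite -{2}HN -ctrM mulmxV // ctr1.
by rewrite -[ctr _]mulmx1 -(mulmxV uN) mulmxA E mul1mx.
Qed.

Lemma unit_inj r (M : 'M[C]_r) :
  (forall x : 'rV[C]_r, x *m M = 0 -> x = 0) -> M \in unitmx.
Proof.
move=> H; rewrite -row_free_unit -kermx_eq0; apply/eqP/row_matrixP => i.
by rewrite row0; apply: H; rewrite -row_mul mulmx_ker row0.
Qed.

Lemma mp_fact p q r (F : 'M[C]_(p, r)) (G : 'M[C]_(r, q)) :
  (forall y : 'cV[C]_r, F *m y = 0 -> y = 0) -> row_free G ->
  exists X, penrose (F *m G) X.
Proof.
move=> HF HG.
pose M := G *m ctr G; pose N := ctr F *m F.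
have hM : ctr M = M by rewrite /M ctrM ctrK.
have hN : ctr N = N by rewrite /N ctrM ctrK.
have uM : M \in unitmx.
  apply: unit_inj => x Hx.
  have : (x *m G) *m ctr (x *m G) = 0.
    by rewrite ctrM mulmxA -(mulmxA x) -/M Hx mul0mx.
  move/ctr_eq0r => H0; apply: (row_free_inj HG).
  by rewrite mul0mx.
have uN : N \in unitmx.
  apply: unit_inj => x Hx.
  have : ctr (F *m ctr x) *m (F *m ctr x) = 0.
    by rewrite ctrM ctrK -mulmxA (mulmxA (ctr F)) -/N mulmxA Hx mul0mx.
  move/ctr_eq0/HF => H1; by rewrite -[x]ctrK H1 ctr0.
have hiM := herm_inv hM uM; have hiN := herm_inv hN uN.
exists (ctr G *m invmx M *m invmx N *m ctr F).
have AX : F *m G *m (ctr G *m invmx M *m invmx N *m ctr F) = F *m invmx N *m ctr F.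
  by rewrite -!mulmxA (mulmxA G) -/M (mulmxA M) mulmxV // mul1mx.
have XA : (ctr G *m invmx M *m invmx N *m ctr F) *m (F *m G) = ctr G *m invmx M *m G.
  by rewrite -!mulmxA (mulmxA (ctr F)) -/N (mulmxA (invmx N)) mulVmx // mul1mx.
split.
- by rewrite AX -!mulmxA (mulmxA (ctr F)) -/N (mulmxA (invmx N)) mulVmx // mul1mx.
- rewrite XA -!mulmxA (mulmxA G) -/M (mulmxA (invmx M)) mulVmx // mul1mx.
  done.
- by rewrite AX !ctrM ctrK hiN mulmxA.
- by rewrite XA !ctrM ctrK hiM mulmxA.
Qed.

Lemma mp_exists p q (A : 'M[C]_(p, q)) : exists X, penrose A X.
Proof.
rewrite -(mulmx_base A); apply: mp_fact; last exact: row_base_free.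
move=> y Hy; have [B HB] := row_fullP (col_base_full A).
by rewrite -[y]mul1mx -HB -mulmxA Hy mulmx0.
Qed.

Lemma mpP p q (A : 'M[C]_(p, q)) : penrose A (mpinv A).
Proof.
rewrite /mpinv; apply: epsilon_spec; exact: mp_exists.
Qed.


Lemma oproj_uniq n (L M : subsp C n) (P Q : 'M[C]_n) :
  is_oproj L M P -> is_oproj L M Q -> P = Q.
Proof.
move=> [PP PL PM] [QQ QL QM]; apply: mx_ext => x.
have [w Hw] : rangesp P (Q *m x) by apply/PL/QL; exists x.
have E1 : P *m (Q *m x) = Q *m x by rewrite Hw mulmxA PP.
have E2 : P *m (x - Q *m x) = 0.
  apply/PM/QM; rewrite /nullsp mulmxBr mulmxA QQ subrr //.
by move: E2; rewrite mulmxBr E1 => /eqP; rewrite subr_eq0 => /eqP.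
Qed.

Lemma oprojE n (L M : subsp C n) (P : 'M[C]_n) : is_oproj L M P -> oproj L M = P.
Proof.
move=> HP; symmetry; apply: (oproj_uniq HP); rewrite /oproj; apply: epsilon_spec.
by exists P.
Qed.

Lemma is_oproj_compl n (L M : subsp C n) (P : 'M[C]_n) :
  is_oproj L M P -> is_oproj M L (1%:M - P).
Proof.
move=> [PP PL PM]; split.
- by rewrite mulmxBl mul1mx mulmxBr mulmx1 PP subrr subr0.
- move=> x; split.
  + move=> [w ->]; apply/PM; rewrite /nullsp mulmxA mulmxBr mulmx1 PP subrr mul0mx //.
  + move=> /PM Hx; exists x; rewrite mulmxBl mul1mx Hx subr0 //.
- move=> x; split.
  + rewrite /nullsp mulmxBl mul1mx => /eqP; rewrite subr_eq0 => /eqP Hx.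
    by apply/PL; exists x.
  + move=> /PL [w ->]; rewrite /nullsp mulmxA mulmxBl mul1mx PP subrr mul0mx //.
Qed.

Lemma herm_orth n (S : subsp C n) (H : 'M[C]_n) :
  ctr H = H -> H *m H = H -> (forall x, S x -> H *m x = x) ->
  (forall x, S (H *m x)) -> oproj_orth S = H.
Proof.
move=> hH HH S1 S2; apply: oprojE; split => //.
- move=> x; split; first by move=> [w ->].
  by move=> Sx; exists x; rewrite S1.
- move=> y; split.
  + move=> Hy x Sx; rewrite -(S1 _ Sx) ctrM hH -mulmxA Hy mulmx0 //.
  + move=> Oy; apply: ctr_eq0.
    have := Oy _ (S2 y); rewrite ctrM hH => E.
    by rewrite -mulmxA (mulmxA H) HH mulmxA E.
Qed.

Section MP.
Variables (p q : nat) (A : 'M[C]_(p, q)).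
Local Notation X := (mpinv A).

Lemma mp1 : A *m X *m A = A. Proof. by case: (mpP A). Qed.
Lemma mp2 : X *m A *m X = X. Proof. by case: (mpP A). Qed.
Lemma mp3 : ctr (A *m X) = A *m X. Proof. by case: (mpP A). Qed.
Lemma mp4 : ctr (X *m A) = X *m A. Proof. by case: (mpP A). Qed.

Lemma mp_l : X = ctr A *m ctr X *m X.
Proof. by rewrite -ctrM mp4 mp2. Qed.
Lemma mp_r : X = X *m ctr X *m ctr A.
Proof. by rewrite -mulmxA -ctrM mp3 mulmxA mp2. Qed.
Lemma ctrA_r : ctr A = X *m A *m ctr A.
Proof. by rewrite -mp4 -ctrM mulmxA mp1. Qed.
Lemma ctrA_l : ctr A = ctr A *m A *m X.
Proof. by rewrite -mulmxA -mp3 -ctrM mp1. Qed.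

Definition nproj := 1%:M - X *m A.
Lemma nproj_herm : ctr nproj = nproj.
Proof. by rewrite /nproj ctrB ctr1 mp4. Qed.
Lemma nproj_idem : nproj *m nproj = nproj.
Proof.
rewrite /nproj mulmxBl mul1mx mulmxBr mulmx1 mulmxA mp2 subrr subr0 //.
Qed.
Lemma nproj_null : A *m nproj = 0.
Proof. by rewrite /nproj mulmxBr mulmx1 mulmxA mp1 subrr. Qed.
Lemma nproj_fix (x : 'cV[C]_q) : A *m x = 0 -> nproj *m x = x.
Proof. by move=> Ax; rewrite /nproj mulmxBl mul1mx -mulmxA Ax mulmx0 subr0. Qed.
Lemma nproj_orth : oproj_orth (nullsp A) = nproj.
Proof.
apply: herm_orth; [exact: nproj_herm | exact: nproj_idem | exact: nproj_fix |].
by move=> x; rewrite /nullsp mulmxA nproj_null mul0mx.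
Qed.
End MP.


Lemma herm_kill n (S : subsp C n) (H : 'M[C]_n) :
  ctr H = H -> H *m H = H -> (forall x, S (H *m x)) ->
  forall y, orthc S y -> H *m y = 0.
Proof.
move=> hH HH S2 y Oy; apply: ctr_eq0.
have := Oy _ (S2 y); rewrite ctrM hH => E.
by rewrite -mulmxA (mulmxA H) HH mulmxA E.
Qed.

Section Main.
Variables (m n k : nat) (A1 : 'M[C]_(m, n)) (A2 : 'M[C]_(k, n)).
Hypothesis HA2 : row_free A2.

Local Notation P := (nproj A2).
Local Notation B := (A1 *m nproj A2).
Local Notation Bp := (mpinv (A1 *m nproj A2)).
Local Notation Q := (mpinv (A1 *m nproj A2) *m A1).
Local Notation G := (ctr A1 *m A1).
Local Notation Gp := (mpinv (ctr A1 *m A1)).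
Local Notation N1 := (nullsp A1).
Local Notation N2 := (nullsp A2).

Lemma A2P : A2 *m P = 0. Proof. exact: nproj_null. Qed.
Lemma hP : ctr P = P. Proof. exact: nproj_herm. Qed.
Lemma PP : P *m P = P. Proof. exact: nproj_idem. Qed.
Lemma ctrB_ : ctr B = P *m ctr A1. Proof. by rewrite ctrM hP. Qed.

Lemma Bp_eq : Bp = P *m (ctr A1 *m ctr Bp *m Bp).
Proof. by rewrite {1}(mp_l B) ctrB_ !mulmxA. Qed.

Lemma PBp : P *m Bp = Bp.
Proof. by rewrite {1}Bp_eq mulmxA PP -Bp_eq. Qed.

Lemma A2Bp : A2 *m Bp = 0.
Proof. by rewrite -PBp mulmxA A2P mul0mx. Qed.

Lemma A1Bp : A1 *m Bp = B *m Bp.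
Proof. by rewrite -mulmxA PBp. Qed.

Lemma A2inv : A2 *m mpinv A2 = 1%:M.
Proof. by apply: (row_free_inj HA2); rewrite /= mul1mx mp1. Qed.

Lemma QQ : Q *m Q = Q.
Proof. by rewrite mulmxA -(mulmxA Bp A1) A1Bp mulmxA mp2. Qed.

Lemma rangeQ x : rangesp Q x <-> imgsp P (rangesp (ctr A1)) x.
Proof.
split.
- move=> [w ->]; exists (ctr A1 *m (ctr Bp *m Bp *m A1 *m w)); split.
    by exists (ctr Bp *m Bp *m A1 *m w).
  by rewrite {1}Bp_eq !mulmxA.
- move=> [s [[w ->] ->]]; exists (P *m (ctr A1 *m w)).
  have E : Bp *m A1 *m (P *m ctr A1) = Bp *m B *m ctr B.
    by rewrite ctrB_ -!mulmxA (mulmxA P P) PP.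
  by rewrite !mulmxA -(mulmxA (Bp *m A1)) E -ctrA_r ctrB_.
Qed.


Lemma hG : ctr G = G. Proof. by rewrite ctrM ctrK. Qed.

Lemma A1_kill p (V : 'M[C]_(n, p)) : G *m V = 0 -> A1 *m V = 0.
Proof.
move=> H; apply: ctr_eq0; by rewrite ctrM -mulmxA (mulmxA (ctr A1)) H mulmx0.
Qed.

Lemma A1G : A1 *m nproj G = 0.
Proof. apply: A1_kill; exact: nproj_null. Qed.

Lemma GGp w : orthc N1 w -> G *m Gp *m w = w.
Proof.
move=> Ow.
pose K := 1%:M - G *m Gp.
have hK : ctr K = K by rewrite /K ctrB ctr1 mp3.
have KK : K *m K = K.
  by rewrite /K mulmxBl mul1mx mulmxBr mulmx1 mulmxA mp1 subrr subr0.
have KG : K *m G = 0 by rewrite /K mulmxBl mul1mx mp1 subrr.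
have GK : G *m K = 0 by rewrite -hG -hK -ctrM KG ctr0.
have S2 : forall x, N1 (K *m x).
  by move=> x; rewrite /nullsp mulmxA (A1_kill GK) mul0mx.
have := @herm_kill _ N1 K hK KK S2 w Ow.
by rewrite /K mulmxBl mul1mx => /eqP; rewrite subr_eq0 => /eqP <-.
Qed.

Lemma Pkill w : orthc N2 w -> P *m w = 0.
Proof.
apply: herm_kill; [exact: hP | exact: PP |].
by move=> x; rewrite /nullsp mulmxA A2P mul0mx.
Qed.

Lemma nullQ x : Q *m x = 0 <->
  addsp N1 (imgsp Gp (orthc (addsp N1 N2))) x.
Proof.
split.
- move=> Qx.
  have E : ctr B *m (A1 *m x) = 0.
    by rewrite (ctrA_l B) -!mulmxA (mulmxA Bp) Qx !mulmx0.
  have PGx : P *m (G *m x) = 0.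
    by rewrite -mulmxA (mulmxA P) -ctrB_ E.
  exists (nproj G *m x), (Gp *m (G *m x)); split.
  + by rewrite /nullsp mulmxA A1G mul0mx.
  + exists (G *m x); split => //.
    move=> z [s' [t' [Hs Ht ->]]].
    have Gs : G *m s' = 0 by rewrite -mulmxA Hs mulmx0.
    have w2 : G *m x = mpinv A2 *m A2 *m (G *m x).
      by move: PGx; rewrite /nproj mulmxBl mul1mx => /eqP; rewrite subr_eq0 => /eqP.
    rewrite ctrD mulmxDl mulmxA -hG -ctrM Gs ctr0 mul0mx add0r.
    rewrite hG w2 mulmxA -mp4 -ctrM.
    by rewrite -mulmxA Ht mulmx0 ctr0 mul0mx.
  + by rewrite /nproj mulmxBl mul1mx -!mulmxA subrK.
- move=> [s [t [Hs [w [Ow ->]] ->]]].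
  have O1 : orthc N1 w.
    by move=> z Hz; apply: Ow; exists z, 0; split; rewrite ?addr0 // /nullsp mulmx0.
  have O2 : orthc N2 w.
    by move=> z Hz; apply: Ow; exists 0, z; split; rewrite ?add0r // /nullsp mulmx0.
  rewrite mulmxDr -mulmxA Hs mulmx0 add0r.
  rewrite (mp_r B) ctrB_ -!mulmxA (mulmxA (ctr A1)) (mulmxA G) (GGp O1).
  by rewrite (Pkill O2) !mulmx0.
Qed.

Lemma Xeq x : imgsp P (rangesp (ctr A1)) x <-> capsp N2 (orthc (capsp N2 N1)) x.
Proof.
split.
- move=> [s [[w ->] ->]]; split; first by rewrite /nullsp mulmxA A2P mul0mx.
  move=> z [H2 H1].
  by rewrite mulmxA -hP -ctrM (nproj_fix H2) mulmxA -ctrM H1 ctr0 mul0mx.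
- move=> [H2 O]; apply/rangeQ; exists x.
  have Px : P *m x = x by apply: nproj_fix.
  have A1x : A1 *m x = B *m x by rewrite -mulmxA Px.
  set u := x - Q *m x.
  have A2u : A2 *m u = 0 by rewrite /u mulmxBr H2 !mulmxA A2Bp !mul0mx subrr.
  have Pu : P *m u = u by apply: nproj_fix.
  have A1u : A1 *m u = 0.
    by rewrite /u mulmxBr !mulmxA A1Bp -(mulmxA (B *m Bp)) A1x mulmxA mp1 subrr.
  have Bu : B *m u = 0 by rewrite -mulmxA Pu A1u.
  have E1 : ctr u *m x = 0 by apply: O.
  have E2 : ctr u *m (Q *m x) = 0.
    by rewrite -mulmxA A1x (mulmxA Bp) (mulmxA (ctr u)) -mp4 -ctrM -mulmxA Bu mulmx0 ctr0 mul0mx.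
  have : u = 0.
    apply: ctr_eq0; rewrite {2}/u mulmxBr E1 E2 subrr //.
  by move/eqP; rewrite subr_eq0 => /eqP.
Qed.

Lemma dsum : direct_sum N1 (imgsp Gp (orthc (addsp N1 N2))).
Proof.
move=> x H1 [w [_ Hx]]; apply: ctr_eq0.
have Gx : G *m x = 0 by rewrite -mulmxA H1 mulmx0.
by rewrite {2}Hx (mp_l G) hG !mulmxA -ctrM (H1 : A1 *m x = 0) ctr0 !mul0mx.
Qed.

Lemma QX : is_oproj (imgsp P (rangesp (ctr A1)))
  (addsp N1 (imgsp Gp (orthc (addsp N1 N2)))) Q.
Proof. split; [exact: QQ | exact: rangeQ | exact: nullQ]. Qed.


Lemma zmod_id (V : zmodType) (a1 a u v : V) : a1 + (a - a1 - (v - u)) = a + (u - v).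
Proof. by rewrite opprB addrA [a1 + _]addrC subrK. Qed.

Variables (b1 : 'cV[C]_m) (b2 : 'cV[C]_k).
Local Notation c := (b1 - A1 *m (mpinv A2 *m b2)).
Local Notation xi' := (mpinv A2 *m b2 + Bp *m c).

Lemma BpA1 : Bp *m A1 *m mpinv A1 = Bp.
Proof.
rewrite {1}(mp_r B) -!mulmxA ctrB_ -mulmxA (mulmxA (ctr A1)) -ctrA_l -ctrB_.
by rewrite mulmxA -mp_r.
Qed.

Lemma xiE : mpinv A1 *m b1 + (1%:M - Q) *m (mpinv A2 *m b2 - mpinv A1 *m b1) = xi'.
Proof.
rewrite mulmxBl mul1mx (mulmxBr Q) (mulmxA Q (mpinv A1)) BpA1 -(mulmxA Bp A1 (mpinv A2 *m b2)).
rewrite (mulmxBr Bp); exact: zmod_id.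
Qed.

Lemma A2xi : A2 *m xi' = b2.
Proof. by rewrite mulmxDr mulmxA A2inv mul1mx mulmxA A2Bp mul0mx addr0. Qed.

Lemma xi_orth (z : 'cV[C]_n) : A1 *m z = 0 -> A2 *m z = 0 -> ctr z *m xi' = 0.
Proof.
move=> H1 H2.
have Bz : B *m z = 0 by rewrite -mulmxA nproj_fix // H1.
have E1 : ctr z *m mpinv A2 = 0.
  by rewrite -(mp2 A2) (mulmxA (ctr z)) -mp4 -ctrM -mulmxA H2 mulmx0 ctr0 !mul0mx.
have E2 : ctr z *m Bp = 0.
  by rewrite -(mp2 B) (mulmxA (ctr z)) -mp4 -ctrM -mulmxA Bz mulmx0 ctr0 !mul0mx.
by rewrite mulmxDr !mulmxA E1 E2 !mul0mx addr0.
Qed.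

Lemma resid : A1 *m xi' - b1 = B *m Bp *m c - c.
Proof.
rewrite mulmxDr (mulmxA A1 Bp) A1Bp.
by rewrite opprB addrA [_ + B *m Bp *m _]addrC.
Qed.

Lemma resid_orth (v : 'cV[C]_n) : A2 *m v = 0 -> ctr (A1 *m v) *m (A1 *m xi' - b1) = 0.
Proof.
move=> H2; rewrite resid -(nproj_fix H2) mulmxA ctrM.
rewrite ctrM hP -(mulmxA (ctr v)) -ctrB_ -mulmxA (mulmxBr (ctr B)) (mulmxA (ctr B) (B *m Bp)) (mulmxA (ctr B) B) -ctrA_l.
by rewrite subrr mulmx0.
Qed.


Lemma Dnull (u : 'cV[C]_n) : col_mx A1 A2 *m u = 0 <-> A1 *m u = 0 /\ A2 *m u = 0.
Proof.
rewrite mul_col_mx; split.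
- by move/eqP; rewrite col_mx_eq0 => /andP [/eqP -> /eqP ->].
- by move=> [-> ->]; apply/eqP; rewrite col_mx_eq0 !eqxx.
Qed.

Lemma H0E : oproj_orth (capsp N1 N2) = nproj (col_mx A1 A2).
Proof.
apply: herm_orth; [exact: nproj_herm | exact: nproj_idem | |].
- by move=> x [H1 H2]; apply: nproj_fix; apply/Dnull.
- move=> x; apply/Dnull; by rewrite mulmxA nproj_null mul0mx.
Qed.

Lemma main_gen :
  let X : subsp _ n := imgsp (oproj_orth (nullsp A2)) (rangesp (ctr A1)) in
  let Y : subsp _ n :=
    addsp (nullsp A1)
      (imgsp (mpinv (ctr A1 *m A1))
         (orthc (addsp (nullsp A1) (nullsp A2)))) in
  let PYX := oproj Y X in
  let Xi : subsp _ n := fun x => exists z,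
      [/\ nullsp A1 z, nullsp A2 z &
          x = mpinv A1 *m b1 + PYX *m (mpinv A2 *m b2 - mpinv A1 *m b1) + z] in
  let xi := mpinv A1 *m b1 + PYX *m (mpinv A2 *m b2 - mpinv A1 *m b1) in
  eqsp X (capsp (nullsp A2) (orthc (capsp (nullsp A2) (nullsp A1)))) /\
  direct_sum (nullsp A1)
    (imgsp (mpinv (ctr A1 *m A1)) (orthc (addsp (nullsp A1) (nullsp A2)))) /\
  complementary X Y /\
  oproj X Y = 1%:M - PYX /\
  1%:M - PYX = mpinv (A1 *m (1%:M - mpinv A2 *m A2)) *m A1 /\
  (forall x, A2 *m x = b2 ->
     (forall x', A2 *m x' = b2 ->
        vnorm (A1 *m x - b1) ^+ 2 <= vnorm (A1 *m x' - b1) ^+ 2) ->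
     Xi x) /\
  (Xi xi /\ forall x, Xi x -> x <> xi -> vnorm xi < vnorm x) /\
  (forall y, let psi := xi + oproj_orth (capsp (nullsp A1) (nullsp A2)) *m y in
     Xi psi /\ forall x, Xi x -> x <> psi -> vnorm (psi - y) < vnorm (x - y)).
Proof.
move=> X Y PYX Xi xi.
have XE : X = imgsp P (rangesp (ctr A1)) by rewrite /X nproj_orth.
have QXY : is_oproj X Y Q by rewrite XE; exact: QX.
have PYXE : PYX = 1%:M - Q by rewrite /PYX; apply: oprojE; apply: is_oproj_compl.
have xiE' : xi = xi' by rewrite /xi PYXE; exact: xiE.
have XiE : forall x, Xi x <-> exists z, [/\ A1 *m z = 0, A2 *m z = 0 & x = xi' + z].
  by move=> x; rewrite /Xi; fold xi; rewrite xiE'.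
split; first by move=> x; rewrite XE; exact: Xeq.
split; first exact: dsum.
split.
  case: QXY => QQ' QR QN; split.
  - move=> x; exists (Q *m x), ((1%:M - Q) *m x); split.
    + by apply/QR; exists x.
    + by apply/QN; rewrite /nullsp mulmxA mulmxBr mulmx1 QQ' subrr mul0mx.
    + by rewrite mulmxBl mul1mx addrC subrK.
  - move=> x /QR [w Hw] /QN Hx.
    by rewrite -Hx Hw mulmxA QQ'.
split; first by rewrite (oprojE QXY) PYXE opprB addrC subrK.
split; first by rewrite PYXE opprB addrC subrK.
split.
  move=> x Hx Hopt; apply/XiE.
  have Hxi := Hopt _ A2xi; rewrite !vnormE in Hxi.
  set v := x - xi'.
  have A2v : A2 *m v = 0 by rewrite /v mulmxBr Hx A2xi subrr.
  have ex : A1 *m x - b1 = A1 *m v + (A1 *m xi' - b1).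
    by rewrite addrA -mulmxDr /v subrK.
  move: Hxi; rewrite ex pythag; last exact: resid_orth.
  rewrite -{2}[nsq (A1 *m xi' - b1)]add0r lerD2r => Hle.
  have A1v : A1 *m v = 0.
    apply/eqP; apply/negPn/negP => /nsq_gt0 Hgt.
    by move: (lt_le_trans Hgt Hle); rewrite ltxx.
  by exists v; split => //; rewrite /v addrC subrK.
split.
  split; first by apply/XiE; exists 0; rewrite !mulmx0 addr0.
  move=> x /XiE [z [H1 H2 ->]] Hne; rewrite xiE'; apply: vnorm_lt.
  rewrite [nsq (_ + z)]pythag; last by apply: ctr_orth_sym; exact: xi_orth.
  rewrite ltrDl; apply: nsq_gt0; apply/eqP => z0; apply: Hne.
  by rewrite xiE' z0 addr0.
move=> y psi.
have [H1y H2y] : A1 *m (nproj (col_mx A1 A2) *m y) = 0 /\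
                 A2 *m (nproj (col_mx A1 A2) *m y) = 0.
  by apply/Dnull; rewrite mulmxA nproj_null mul0mx.
split; first by apply/XiE; exists (nproj (col_mx A1 A2) *m y); rewrite /psi -xiE' H0E.
move=> x /XiE [z [H1 H2 ->]] Hne.
rewrite /psi H0E xiE'; set H := nproj (col_mx A1 A2).
set u := z - H *m y.
have A1u : A1 *m u = 0 by rewrite /u mulmxBr H1 H1y subrr.
have A2u : A2 *m u = 0 by rewrite /u mulmxBr H2 H2y subrr.
have Hu : H *m u = u by apply: nproj_fix; apply/Dnull.
have ex : xi' + z - y = (xi' + H *m y - y) + u.
  by rewrite /u addrACA [xi' + H *m y + z]addrAC addrACA subrr addr0.
have O : ctr u *m (xi' + H *m y - y) = 0.
  rewrite (mulmxBr (ctr u)) (mulmxDr (ctr u) xi') (xi_orth A1u A2u) add0r.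
  by rewrite mulmxA /H -nproj_herm -ctrM -/H Hu subrr.
apply: vnorm_lt; rewrite ex [nsq (_ + u)]pythag; last exact: ctr_orth_sym.
rewrite ltrDl; apply: nsq_gt0; apply/eqP => u0; apply: Hne.
rewrite /psi H0E xiE' -/H; move/eqP: u0; rewrite /u subr_eq0 => /eqP ->.
done.
Qed.

End Main.



End Lin.

Theorem corollary4 (R : realType) (m n k : nat)
    (A1 : 'M[R[i]]_(m, n)) (b1 : 'cV[R[i]]_m)
    (A2 : 'M[R[i]]_(k, n)) (b2 : 'cV[R[i]]_k) :
  \rank A2 = k -> (1 <= k)%N ->
  let X : subsp _ n := imgsp (oproj_orth (nullsp A2)) (rangesp (ctr A1)) in
  let Y : subsp _ n :=
    addsp (nullsp A1)
      (imgsp (mpinv (ctr A1 *m A1))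
         (orthc (addsp (nullsp A1) (nullsp A2)))) in
  let PYX := oproj Y X in
  let Xi : subsp _ n := fun x => exists z,
      [/\ nullsp A1 z, nullsp A2 z &
          x = mpinv A1 *m b1 + PYX *m (mpinv A2 *m b2 - mpinv A1 *m b1) + z] in
  let xi := mpinv A1 *m b1 + PYX *m (mpinv A2 *m b2 - mpinv A1 *m b1) in
  (* the two descriptions of X agree, and the sum defining Y is direct *)
  eqsp X (capsp (nullsp A2) (orthc (capsp (nullsp A2) (nullsp A1)))) /\
  direct_sum (nullsp A1)
    (imgsp (mpinv (ctr A1 *m A1)) (orthc (addsp (nullsp A1) (nullsp A2)))) /\
  (* X and Y are complementary, with the stated projector formula *)
  complementary X Y /\
  oproj X Y = 1%:M - PYX /\
  1%:M - PYX = mpinv (A1 *m (1%:M - mpinv A2 *m A2)) *m A1 /\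
  (* 1. every constrained least-squares solution lies in Xi *)
  (forall x, A2 *m x = b2 ->
     (forall x', A2 *m x' = b2 ->
        vnorm (A1 *m x - b1) ^+ 2 <= vnorm (A1 *m x' - b1) ^+ 2) ->
     Xi x) /\
  (* 2. xi is the (unique) element of Xi of smallest norm *)
  (Xi xi /\ forall x, Xi x -> x <> xi -> vnorm xi < vnorm x) /\
  (* 3. psi(y) = xi + P_{N(A1) cap N(A2)} y is the (unique) nearest point of Xi to y *)
  (forall y, let psi := xi + oproj_orth (capsp (nullsp A1) (nullsp A2)) *m y in
     Xi psi /\ forall x, Xi x -> x <> psi -> vnorm (psi - y) < vnorm (x - y)).

Proof.
move=> hr _.
have HA2 : row_free A2 by rewrite /row_free hr.
exact: (@main_gen _ m n k A1 A2 HA2 b1 b2).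
Qed.
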